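(* For natural concepts $C_1,C_2,C_3,D_1,D_2,D_3,E_1,E_2$: (a) $\{C_1:C_2::D_1:D_2,\ D_1:D_2::E_1:E_2\}\models C_1:C_2::E_1:E_2$; (b) $\{C_1:C_2::D_1:D_2,\ C_2:C_3::D_2:D_3\}\models C_1:C_3::D_1:D_3$.
   Context: Concepts: $C,D::=\top\mid\bot\mid A\mid C\sqcap D\mid \exists r.C\mid N$; natural concepts: $N,N'::=A'\mid N\sqcap N'\mid N\bowtie N'\mid \exists r'.N$, with $A$ a concept name, $A'$ a natural concept name, $r$ a role name, $r'$ an intra-domain role name. A domain constrained interpretation is $\mathfrak{I}=(\mathcal{I},[\mathcal{F}_1,\dots,\mathcal{F}_k],\mathcal{X},\pi,\sim,\mathcal{S})$ where $\mathcal{I}=(\Delta^{\mathcal{I}},\cdot^{\mathcal{I}})$ is a classical DL interpretation, $[\mathcal{F}_1,\dots,\mathcal{F}_k]$ partitions a nonempty finite set $\mathcal{F}$, $\mathcal{X}\subseteq2^{\mathcal{F}}$ with $\mathcal{F}\in\mathcal{X}$, $\pi:\Delta^{\mathcal{I}}\to2^{\mathcal{F}}$, $\sim$ an equivalence relation on $\{1,\dots,k\}$, $\mathcal{S}=\{\sigma_{(s,t)}\mid(s,t)\in\sim\}$ with $\sigma_{(s,t)}:\mathcal{F}_s\to\mathcal{F}_t$ bijections. With $\mathcal{C}=\{G\subseteq\mathcal{F}\mid X\not\subseteq G\ \forall X\in\mathcal{X}\}$ and $\mathcal{C}^i=\{G\in\mathcal{C}\mid G\subseteq\mathcal{F}_i\}$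 it is required: (1) $X\not\subseteq\pi(d)$ for all $d$, $X\in\mathcal{X}$; (2) each $G\in\mathcal{C}$ is $\pi(d)$ for some $d$; (3) $\sigma_{(s,t)}^{-1}=\sigma_{(t,s)}$, $\sigma_{(t,u)}\circ\sigma_{(s,t)}=\sigma_{(s,u)}$; (4) $\sigma_{(i,j)}(G)\in\mathcal{C}$ for $G\in\mathcal{C}^i$, $(i,j)\in\sim$; (5) $\{f,g\}\in\mathcal{X}$ whenever $f\in\mathcal{F}_i$, $g\in\mathcal{F}_j$, $(i,j)\in\sim$, $i\neq j$. $\varphi(C)=\bigcap\{\pi(d)\mid d\in C^{\mathcal{I}}\}$ ($=\mathcal{F}$ if $C^{\mathcal{I}}=\emptyset$). Concepts are interpreted as usual, with $(N\bowtie N')^{\mathcal{I}}=\{d\mid\varphi(N)\cap\varphi(N')\subseteq\pi(d)\}$. An intra-domain relation $r$: there is $\kappa_r:2^{\mathcal{F}}\to2^{\mathcal{F}}$ with $(\exists r.C)^{\mathcal{I}}=\{d\mid\kappa_r(\varphi(C))\subseteq\pi(d)\}$ for all $C$, $\kappa_r(G)=\bigcup_i\kappa_r(G\cap\mathcal{F}_i)$ for $G\in\mathcal{C}$, $\kappa_r(G)\subseteq\mathcal{F}_i$ for $G\in\mathcal{C}^i$, $\kappa_r(\sigma_{(i,j)}(G))=\sigma_{(i,j)}(\kappa_r(G))$ for $(i,j)\in\sim$, $G\in\mathcal{C}^i$, and $\kappa_r(G)\neq\emptyset$ for $G\in\mathcal{C}^i\setminus\{\emptyset\}$. $\delta(C)=\{i\mid\mathcal{F}_i\cap\varphi(C)\neq\emptyset\}$.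 For $U=\{(s_1,t_1),\dots,(s_l,t_l)\}\subseteq\sim$ with pairwise distinct $s_i$ and pairwise distinct $t_i$, the domain translation $\sigma_U:\mathcal{F}\to\mathcal{F}$ maps $f\in\mathcal{F}_{s_i}$ to $\sigma_{(s_i,t_i)}(f)$ and fixes all other features; $\mathrm{src}(U)=\{s_i\}$, $\mathrm{tgt}(U)=\{t_i\}$. $\mu(C,D)$ is the set of $\sigma_U$ with $\varphi(D)=\sigma_U(\varphi(C))$, $\mathrm{src}(U)\subseteq\delta(C)$, $\mathrm{tgt}(U)\cap(\delta(C)\setminus\mathrm{src}(U))=\emptyset$. An analogy assertion $C_1:C_2::D_1:D_2$ (between natural concepts) is satisfied in $\mathfrak{I}$ iff $\mu(C_1,C_2)\cap\mu(D_1,D_2)\neq\emptyset$; a concept inclusion $C\sqsubseteq D$ is satisfied iff $C^{\mathcal{I}}\subseteq D^{\mathcal{I}}$. A TBox is a finite set of concept inclusions and analogy assertions. $\mathfrak{I}$ is a model of a TBox $\mathcal{T}$ if it satisfies all its elements, every natural concept $N$ in $\mathcal{T}$ satisfies $N^{\mathcal{I}}=\{d\mid\varphi(N)\subseteq\pi(d)\}$, and every intra-domain role name is interpreted as an intra-domain relation. $\mathcal{T}\models\psi$ means every model of $\mathcal{T}$ satisfies $\psi$. *)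

(* Defs.v *)
From mathcomp Require Import all_boot.
From mathcomp Require Import boolp classical_sets.
From Stdlib Require List.

Set Implicit Arguments.
Unset Strict Implicit.
Unset Printing Implicit Defensive.

Local Open Scope classical_set_scope.

(* Syntax.  CN = concept names, RN = role names.  Natural concept names
   and intra-domain role names are distinguished subsets, given by
   predicates isNat / isIntra of the signature.                        *)

Section Syntax.
Variables (CN RN : Type).

Inductive nconcept : Type :=
  | NName of CN
  | NAnd  of nconcept & nconcept
  | NJoin of nconcept & nconcept
  | NEx   of RN & nconcept.

Inductive concept : Type :=
  | CTop
  | CBot
  | CName of CN
  | CAnd  of concept & concept
  | CEx   of RN & concept
  | CNat  of nconcept.

Fixpoint wf_nc (isNat : CN -> Prop) (isIntra : RN -> Prop) (N : nconcept)
  : Prop :=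
  match N with
  | NName A => isNat A
  | NAnd N1 N2 => wf_nc isNat isIntra N1 /\ wf_nc isNat isIntra N2
  | NJoin N1 N2 => wf_nc isNat isIntra N1 /\ wf_nc isNat isIntra N2
  | NEx r N1 => isIntra r /\ wf_nc isNat isIntra N1
  end.

(* TBox elements: concept inclusions and analogy assertions
   N1 : N2 :: M1 : M2 between natural concepts *)
Inductive axiom : Type :=
  | Incl of concept & concept
  | Analogy of nconcept & nconcept & nconcept & nconcept.

Definition tbox := seq axiom.

Fixpoint nsubs (N : nconcept) : seq nconcept :=
  N :: match N with
       | NName _ => [::]
       | NAnd N1 N2 => nsubs N1 ++ nsubs N2
       | NJoin N1 N2 => nsubs N1 ++ nsubs N2
       | NEx _ N1 => nsubs N1
       end.

Fixpoint csubs (C : concept) : seq nconcept :=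
  match C with
  | CTop | CBot | CName _ => [::]
  | CAnd C1 C2 => csubs C1 ++ csubs C2
  | CEx _ C1 => csubs C1
  | CNat N => nsubs N
  end.

Definition axsubs (a : axiom) : seq nconcept :=
  match a with
  | Incl C D => csubs C ++ csubs D
  | Analogy N1 N2 M1 M2 => nsubs N1 ++ nsubs N2 ++ nsubs M1 ++ nsubs M2
  end.

Definition occurs_in (T : tbox) (N : nconcept) : Prop :=
  exists2 a, List.In a T & List.In N (axsubs a).

End Syntax.

(* Domain constrained interpretations.
   D = domain Δ, F = feature set (a finite type), k = number of blocks;
   the partition [F_1,...,F_k] is given by blk : F -> 'I_k.           *)

Record dcinterp (CN RN D : Type) (F : finType) (k : nat) := DCInterp {
  cI  : CN -> set D;
  rI  : RN -> D -> D -> Prop;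
  blk : F -> 'I_k;
  Xs  : set (set F);
  pi  : D -> set F;
  eqv : 'I_k -> 'I_k -> Prop;
  sig : 'I_k -> 'I_k -> F -> F       (* σ_(s,t), relevant for s ∼ t on F_s *)
}.

Section Semantics.
Variables (CN RN D : Type) (F : finType) (k : nat).
Variable I : dcinterp CN RN D F k.

Definition block (i : 'I_k) : set F := [set f | blk I f = i].

Definition CC (G : set F) : Prop := forall Y, Xs I Y -> ~ (Y `<=` G).
Definition CCi (i : 'I_k) (G : set F) : Prop := CC G /\ G `<=` block i.

(* φ of a set of individuals: ⋂ {π(d) | d ∈ S}, = F if S = ∅ *)
Definition phiS (S : set D) : set F := [set f | forall d, S d -> pi I d f].

Fixpoint nint (N : nconcept CN RN) : set D :=
  match N with
  | NName A => cI I A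
  | NAnd N1 N2 => nint N1 `&` nint N2
  | NJoin N1 N2 => [set d | phiS (nint N1) `&` phiS (nint N2) `<=` pi I d]
  | NEx r N1 => [set d | exists e, rI I r d e /\ nint N1 e]
  end.

Fixpoint cint (C : concept CN RN) : set D :=
  match C with
  | CTop => setT
  | CBot => set0
  | CName A => cI I A
  | CAnd C1 C2 => cint C1 `&` cint C2
  | CEx r C1 => [set d | exists e, rI I r d e /\ cint C1 e]
  | CNat N => nint N
  end.

Definition is_dci : Prop :=
  inhabited D /\
  (exists f : F, True) /\
  (forall i : 'I_k, exists f, blk I f = i) /\
  Xs I setT /\
  (* (1) *)
  (forall d Y, Xs I Y -> ~ (Y `<=` pi I d)) /\
  (forall G, CC G -> exists d, pi I d = G) /\
  (forall i, eqv I i i) /\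
  (forall i j, eqv I i j -> eqv I j i) /\
  (forall i j l, eqv I i j -> eqv I j l -> eqv I i l) /\
  (forall s t, eqv I s t ->
     [/\ (forall f, blk I f = s -> blk I (sig I s t f) = t),
         (forall f g, blk I f = s -> blk I g = s ->
             sig I s t f = sig I s t g -> f = g) &
         (forall g, blk I g = t -> exists2 f, blk I f = s & sig I s t f = g)]) /\
  (forall s t f, eqv I s t -> blk I f = s -> sig I t s (sig I s t f) = f) /\
  (forall s t u f, eqv I s t -> eqv I t u -> blk I f = s ->
     sig I t u (sig I s t f) = sig I s u f) /\
  (forall i j G, eqv I i j -> CCi i G -> CC (sig I i j @` G)) /\
  (* (5) *)
  (forall i j f g, eqv I i j -> i <> j -> blk I f = i -> blk I g = j ->
     Xs I [set x | x = f \/ x = g]).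

Definition intra_rel (r : RN) : Prop :=
  exists kappa : set F -> set F,
    [/\ (forall C : concept CN RN,
           cint (CEx r C) = [set d | kappa (phiS (cint C)) `<=` pi I d]),
        (forall G, CC G ->
           kappa G = [set f | exists i : 'I_k, kappa (G `&` block i) f]),
        (forall i G, CCi i G -> kappa G `<=` block i),
        (forall i j G, eqv I i j -> CCi i G ->
           kappa (sig I i j @` G) = sig I i j @` kappa G) &
        (forall i G, CCi i G -> G <> set0 -> kappa G <> set0)].

Definition delta (S : set D) : set 'I_k :=
  [set i | exists f, blk I f = i /\ phiS S f].

Definition validU (U : {set 'I_k * 'I_k}) : Prop :=
  [/\ (forall s t, (s, t) \in U -> eqv I s t),
      (forall s t t', (s, t) \in U -> (s, t') \in U -> t = t') &
      (forall s s' t, (s, t) \in U -> (s', t) \in U -> s = s')].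

Definition sigmaU (U : {set 'I_k * 'I_k}) (f : F) : F :=
  match [pick t | (blk I f, t) \in U] with
  | Some t => sig I (blk I f) t f
  | None => f
  end.

Definition srcU (U : {set 'I_k * 'I_k}) : set 'I_k :=
  [set s | exists t, (s, t) \in U].
Definition tgtU (U : {set 'I_k * 'I_k}) : set 'I_k :=
  [set t | exists s, (s, t) \in U].

(* g ∈ μ(C, D), with C, D given by their extensions S, T *)
Definition mu (S T : set D) (g : F -> F) : Prop :=
  exists U : {set 'I_k * 'I_k},
    [/\ validU U,
        (forall f, g f = sigmaU U f),
        phiS T = sigmaU U @` phiS S,
        srcU U `<=` delta S &
        tgtU U `&` (delta S `\` srcU U) = set0].

Definition sat (a : axiom CN RN) : Prop :=
  match a with
  | Incl C1 C2 => cint C1 `<=` cint C2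
  | Analogy N1 N2 M1 M2 =>
      exists g, mu (nint N1) (nint N2) g /\ mu (nint M1) (nint M2) g
  end.

Definition is_model (isIntra : RN -> Prop) (T : tbox CN RN) : Prop :=
  [/\ is_dci,
      (forall a, List.In a T -> sat a),
      (forall N, occurs_in T N -> nint N = [set d | phiS (nint N) `<=` pi I d]) &
      (forall r, isIntra r -> intra_rel r)].

End Semantics.

Definition entails (CN RN : Type) (isIntra : RN -> Prop)
  (T : tbox CN RN) (psi : axiom CN RN) : Prop :=
  forall (D : Type) (F : finType) (k : nat) (I : dcinterp CN RN D F k),
    is_model I isIntra T -> sat I psi.

(* Main.v *)
Require Import Defs.
From mathcomp Require Import all_boot.
From mathcomp Require Import boolp classical_sets.

Set Implicit Arguments.
Unset Strict Implicit.
Unset Printing Implicit Defensive.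
Local Open Scope classical_set_scope.

Section Main.
Variables (CN RN D : Type) (F : finType) (k : nat) (M : dcinterp CN RN D F k).
Hypothesis HM : is_dci M.

Notation sg := (Defs.sig M).

Lemma facts :
  (forall i : 'I_k, exists f, blk M f = i) /\ Xs M setT /\
  (forall d Y, Xs M Y -> ~ (Y `<=` Defs.pi M d)) /\
  (forall i, eqv M i i) /\
  (forall i j, eqv M i j -> eqv M j i) /\
  (forall i j l, eqv M i j -> eqv M j l -> eqv M i l) /\
  (forall s t, eqv M s t -> forall f, blk M f = s -> blk M (sg s t f) = t) /\
  (forall s t f, eqv M s t -> blk M f = s -> sg t s (sg s t f) = f) /\
  (forall s t u f, eqv M s t -> eqv M t u -> blk M f = s ->
     sg t u (sg s t f) = sg s u f) /\
  (forall i j f g, eqv M i j -> i <> j -> blk M f = i -> blk M g = j ->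
     Xs M [set x | x = f \/ x = g]).
Proof.
case: HM => [_ [_ [Hne [HXT [H1 [H2 [Hrefl [Hsym [Htr [Hbij [Hinv [Hcomp [H4 H5]]]]]]]]]]]]].
do 6 (split => //).
split; last by [].
by move=> s t e; case: (Hbij s t e).
Qed.

Lemma Hne i : exists f, blk M f = i. Proof. by case: facts. Qed.
Lemma H1 d Y : Xs M Y -> ~ (Y `<=` Defs.pi M d).
Proof. by case: facts => _ [_ [h _]]; apply: h. Qed.
Lemma Hrefl i : eqv M i i. Proof. by case: facts => _ [_ [_ [h _]]]. Qed.
Lemma Hsym i j : eqv M i j -> eqv M j i.
Proof. by case: facts => _ [_ [_ [_ [h _]]]]; apply: h. Qed.
Lemma Htr i j l : eqv M i j -> eqv M j l -> eqv M i l.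
Proof. by case: facts => _ [_ [_ [_ [_ [h _]]]]]; apply: h. Qed.
Lemma Hblk s t f : eqv M s t -> blk M f = s -> blk M (sg s t f) = t.
Proof. by case: facts => _ [_ [_ [_ [_ [_ [h _]]]]]] e; apply: h. Qed.
Lemma Hinv s t f : eqv M s t -> blk M f = s -> sg t s (sg s t f) = f.
Proof. by case: facts => _ [_ [_ [_ [_ [_ [_ [h _]]]]]]]; apply: h. Qed.
Lemma Hcomp s t u f : eqv M s t -> eqv M t u -> blk M f = s ->
     sg t u (sg s t f) = sg s u f.
Proof. by case: facts => _ [_ [_ [_ [_ [_ [_ [_ [h _]]]]]]]]; apply: h. Qed.
Lemma H5 i j f g : eqv M i j -> i <> j -> blk M f = i -> blk M g = j ->
     Xs M [set x | x = f \/ x = g].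
Proof. by case: facts => _ [_ [_ [_ [_ [_ [_ [_ [_ h]]]]]]]]; apply: h. Qed.

Lemma sig_id s f : blk M f = s -> sg s s f = f.
Proof.
move=> hf; transitivity (sg s s (sg s s f)).
  by rewrite (Hcomp (Hrefl s) (Hrefl s) hf).
exact: Hinv (Hrefl s) hf.
Qed.

Definition dl (A : set F) : set 'I_k := [set i | exists f, blk M f = i /\ A f].
Definition gt (tau : 'I_k -> 'I_k) (f : F) : F := sg (blk M f) (tau (blk M f)) f.
Definition Q (A B : set F) (tau : 'I_k -> 'I_k) : Prop :=
 [/\ forall s, eqv M s (tau s),
     forall s s', tau s <> s -> tau s' <> s' -> tau s = tau s' -> s = s',
     forall s, tau s <> s -> dl A s,
     forall s s', dl A s -> tau s' = s -> s' <> s -> tau s <> s &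
     B = gt tau @` A].
Definition sparse (X : set 'I_k) := forall s s', X s -> X s' -> eqv M s s' -> s = s'.

Lemma gt_blk tau f : (forall s, eqv M s (tau s)) -> blk M (gt tau f) = tau (blk M f).
Proof. by move=> h; rewrite /gt; apply: Hblk. Qed.

Lemma gt_comp tau1 tau2 a : (forall s, eqv M s (tau1 s)) -> (forall s, eqv M s (tau2 s)) ->
  gt tau2 (gt tau1 a) = sg (blk M a) (tau2 (tau1 (blk M a))) a.
Proof.
move=> h1 h2; rewrite {1}/gt gt_blk //; rewrite /gt.
by apply: Hcomp.
Qed.


Lemma mu_ext S T g g' : g =1 g' -> mu M S T g -> mu M S T g'.
Proof.
move=> e [U [a b c d h]]; exists U; split => // f.
by rewrite -e b.
Qed.

Lemma mu_Q S T g : mu M S T g ->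
  exists tau, Q (phiS M S) (phiS M T) tau /\ forall f, g f = gt tau f.
Proof.
case=> U [[Ueq Ufun Uinj] Hg HT Hsrc Htgt].
pose tau s := if [pick t | (s, t) \in U] is Some t then t else s.
have tauU s : tau s <> s -> (s, tau s) \in U.
  by rewrite /tau; case: pickP => [t Ht|_].
have Es : sigmaU M U =1 gt tau.
  move=> f; rewrite /sigmaU /gt /tau /=; case: pickP => [t Ht|_] //.
  by rewrite sig_id.
have EU : sigmaU M U = gt tau := funext Es.
exists tau; split; last by move=> f; rewrite Hg Es.
split.
- move=> s; rewrite /tau; case: pickP => [t Ht|_]; [exact: Ueq Ht | exact: Hrefl].
- move=> s s' h h' e; apply: (Uinj _ _ (tau s)); first exact: tauU.
  by rewrite e; exact: tauU.
- by move=> s h; apply: Hsrc; exists (tau s); exact: tauU.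
- move=> s s' ds e ne hfix.
  have hs'U : (s', s) \in U.
    by rewrite -e; apply: tauU; rewrite e => h; apply: ne.
  have srcs : srcU U s.
    case: (pselect (srcU U s)) => // hn; exfalso.
    have : (tgtU U `&` (delta M S `\` srcU U)) s.
      by split; [exists s'; exact: hs'U | split].
    by rewrite Htgt.
  case: srcs => u hu; move: hfix; rewrite /tau; case: pickP => [t Ht ets|Hn _].
    by subst t; apply: ne; exact: (Uinj _ _ _ hs'U Ht).
  by move: (Hn u); rewrite hu.
- by rewrite HT EU.
Qed.

Lemma Q_mu S T tau : Q (phiS M S) (phiS M T) tau -> mu M S T (gt tau).
Proof.
case=> Q1 Q2 Q3 Q4 Q5.
pose U := finset (fun p : 'I_k * 'I_k => (p.2 == tau p.1) && (p.1 != p.2)).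
have inU s t : ((s, t) \in U) = (t == tau s) && (s != t) by rewrite /U inE.
have Es : sigmaU M U =1 gt tau.
  move=> f; rewrite /sigmaU /gt; case: pickP => [t|Hn].
    by rewrite inU => /andP [/eqP -> _].
  case: (eqVneq (tau (blk M f)) (blk M f)) => [e|ne]; first by rewrite e sig_id.
  by have := Hn (tau (blk M f)); rewrite inU eqxx /= eq_sym ne.
exists U; split.
- split.
  + by move=> s t; rewrite inU => /andP [/eqP -> _]; exact: Q1.
  + by move=> s t t'; rewrite !inU => /andP [/eqP -> _] /andP [/eqP -> _].
  + move=> s s' t; rewrite !inU => /andP [/eqP e1 n1] /andP [/eqP e2 n2].
    apply: Q2; last by rewrite -e1 -e2.
      by rewrite -e1 => h; move: n1; rewrite h eqxx.
    by rewrite -e2 => h; move: n2; rewrite h eqxx.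
- by move=> f; rewrite Es.
- by rewrite (funext Es); exact: Q5.
- move=> s [t]; rewrite inU => /andP [/eqP e n]; apply: Q3.
  by rewrite -e => h; move: n; rewrite h eqxx.
- apply/seteqP; split => t //= [[s hs] [dt nsrc]]; exfalso.
  move: hs; rewrite inU => /andP [/eqP e n].
  have ht : tau t <> t.
    apply: (Q4 t s dt (esym e)) => h; move: n; rewrite h eqxx //.
  apply: nsrc; exists (tau t); rewrite inU eqxx /=.
  by apply/eqP => h; apply: ht.
Qed.

Lemma gt_inj tau tau' : (forall s, eqv M s (tau s)) -> (forall s, eqv M s (tau' s)) ->
  gt tau =1 gt tau' -> tau =1 tau'.
Proof.
move=> h1 h2 E s; have [f hf] := Hne s.
by have := gt_blk f h1; rewrite E gt_blk // hf.
Qed.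

Lemma dl_img A tau : (forall s, eqv M s (tau s)) -> forall s,
  dl (gt tau @` A) s -> exists s', dl A s' /\ tau s' = s.
Proof.
move=> h1 s [f [hf [a ha ea]]]; exists (blk M a); split.
  by exists a.
by rewrite -gt_blk // ea hf.
Qed.

Lemma dl_img2 A tau : (forall s, eqv M s (tau s)) -> forall s,
  dl A s -> dl (gt tau @` A) (tau s).
Proof.
move=> h1 s [a [ha Aa]]; exists (gt tau a); split; last by exists a.
by rewrite gt_blk // ha.
Qed.

Lemma Q_inj A B tau : Q A B tau -> forall s s', dl A s -> dl A s' ->
  tau s = tau s' -> s = s'.
Proof.
case=> Q1 Q2 Q3 Q4 Q5 s s' ds ds' e.
case: (eqVneq (tau s) s) => [fs|ms]; case: (eqVneq (tau s') s') => [fs'|ms'].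
- by rewrite -fs e fs'.
- case: (eqVneq s s') => // ne; exfalso.
  apply: (Q4 s s' ds); [by rewrite -e fs | by apply/eqP; rewrite eq_sym | exact: fs].
- case: (eqVneq s s') => // ne; exfalso.
  apply: (Q4 s' s ds'); [by rewrite e fs' | by apply/eqP | exact: fs'].
- by apply: Q2 => //; apply/eqP.
Qed.

Lemma phi_cases S : phiS M S = setT \/ sparse (dl (phiS M S)).
Proof.
case: (pselect (exists d, S d)) => [[d Sd]|nS]; [right|left].
  move=> s s' [f [hf pf]] [g [hg pg]] e.
  case: (eqVneq s s') => // /eqP ne; exfalso.
  apply: (H1 (d := d) (H5 e ne hf hg)).
  by move=> x [->|->]; [exact: pf | exact: pg].
apply/seteqP; split => f // _ d Sd; exfalso; apply: nS; by exists d.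
Qed.

Lemma dlT s : dl setT s.
Proof. by have [f hf] := Hne s; exists f. Qed.

Lemma Q_setT_id A B B' tau : Q setT B tau -> Q A B' tau -> sparse (dl A) ->
  forall s, tau s = s.
Proof.
case=> Q1 _ _ Q4 _ [_ _ Q3 _ _] sp s.
case: (eqVneq (tau s) s) => // /eqP ne; exfalso.
have ds := Q3 s ne.
have nt : ~ dl A (tau s).
  by move=> dt; apply: ne; rewrite -(sp s (tau s) ds dt (Q1 s)).
have ft : tau (tau s) = tau s.
  by case: (eqVneq (tau (tau s)) (tau s)) => // /eqP h; case: nt; apply: Q3.
by apply: (Q4 (tau s) s (dlT _) erefl) => // h; apply: ne; rewrite -h.
Qed.

Lemma Q_sparse_eq A B tau1 tau2 : Q A B tau1 -> Q A B tau2 -> sparse (dl A) ->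
  tau1 =1 tau2.
Proof.
case=> Q1 _ Q3 _ Q5 [R1 _ R3 _ R5] sp s.
case: (pselect (dl A s)) => ds.
  have [a [ha Aa]] := ds.
  have : B (gt tau1 a) by rewrite Q5; exists a.
  rewrite R5 => -[b Ab eb].
  have := congr1 (blk M) eb; rewrite !gt_blk // ha => e.
  have bs : blk M b = s.
    apply: sp; [by exists b | exact: ds |].
    apply: Htr (R1 _) _; rewrite e; exact: Hsym (Q1 s).
  by rewrite -e bs.
have f1 : tau1 s = s.
  by case: (eqVneq (tau1 s) s) => // /eqP h; case: ds; apply: Q3.
have f2 : tau2 s = s.
  by case: (eqVneq (tau2 s) s) => // /eqP h; case: ds; apply: R3.
by rewrite f1 f2.
Qed.

Lemma Q_ext A B tau tau' : tau =1 tau' -> Q A B tau -> Q A B tau'.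
Proof. by move/funext => ->. Qed.

Lemma Q5 A B tau : Q A B tau -> B = gt tau @` A.
Proof. by case. Qed.
Lemma Q1 A B tau : Q A B tau -> forall s, eqv M s (tau s).
Proof. by case. Qed.
Lemma Q3 A B tau : Q A B tau -> forall s, tau s <> s -> dl A s.
Proof. by case. Qed.

Definition tcomp (A1 a1 : set F) (tau1 tau2 : 'I_k -> 'I_k) (s : 'I_k) : 'I_k :=
  if pselect (dl A1 s /\ dl a1 s) then tau2 (tau1 s) else s.

Lemma Q_comp A1 A2 A3 a1 a2 a3 tau1 tau2 :
  Q A1 A2 tau1 -> Q a1 a2 tau1 -> Q A2 A3 tau2 -> Q a2 a3 tau2 ->
  Q A1 A3 (tcomp A1 a1 tau1 tau2).
Proof.
move=> qA1 qa1 qA2 qa2.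
have K s : dl A1 s -> ~ dl a1 s -> tau2 (tau1 s) = s.
  move=> ds nds.
  have fix1 : tau1 s = s.
    by case: (eqVneq (tau1 s) s) => // /eqP h; case: nds; apply: (Q3 qa1).
  rewrite fix1; case: (eqVneq (tau2 s) s) => // /eqP m; exfalso.
  have := Q3 qa2 m; rewrite (Q5 qa1) => /(dl_img (Q1 qa1)) [s' [ds' e]].
  case: qA1 => _ _ _ Q4 _.
  apply: (Q4 s s' ds e) => // h; apply: nds; rewrite -h //.
have Lc s : dl A1 s -> tcomp A1 a1 tau1 tau2 s = tau2 (tau1 s).
  move=> ds; rewrite /tcomp; case: pselect => // h.
  by rewrite K // => d; apply: h.
have InjC s s' : dl A1 s -> dl A1 s' -> tau2 (tau1 s) = tau2 (tau1 s') -> s = s'.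
  move=> ds ds' e; apply: (Q_inj qA1 ds ds').
  apply: (Q_inj qA2) => //; rewrite (Q5 qA1); exact: dl_img2 (Q1 qA1) _ _.
have Q3' s : tcomp A1 a1 tau1 tau2 s <> s -> dl A1 s.
  by rewrite /tcomp; case: pselect => [[]|].
split.
- move=> s; rewrite /tcomp; case: pselect => h; last exact: Hrefl.
  exact: Htr (Q1 qA1 s) (Q1 qA2 _).
- move=> s s' h h' e.
  by apply: InjC (Q3' _ h) (Q3' _ h') _; rewrite -!Lc //; [exact: Q3' | exact: Q3'].
- exact: Q3'.
- move=> s s' ds e ne fs.
  have ds' : dl A1 s' by apply: Q3'; rewrite e => h; apply: ne.
  apply: ne; apply: (InjC s' s ds' ds); by rewrite -(Lc s' ds') -(Lc s ds) e fs.
- have ga a : A1 a -> gt (tcomp A1 a1 tau1 tau2) a = gt tau2 (gt tau1 a).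
    move=> Aa; rewrite gt_comp; [|exact: Q1 qA1|exact: Q1 qA2].
    by rewrite /gt Lc //; exists a.
  rewrite (Q5 qA2) (Q5 qA1); apply/seteqP; split.
    by move=> x [y [a Aa <-] <-]; exists a => //; rewrite ga.
  by move=> x [a Aa <-]; exists (gt tau1 a); [exists a | rewrite ga].
Qed.

Lemma tcompC A1 a1 tau1 tau2 : tcomp A1 a1 tau1 tau2 =1 tcomp a1 A1 tau1 tau2.
Proof.
move=> s; rewrite /tcomp; case: pselect => h1; case: pselect => h2 //.
  by case: h2; case: h1.
by case: h1; case: h2.
Qed.

End Main.

Theorem proposition6 (CN RN : Type) (isNat : CN -> Prop) (isIntra : RN -> Prop)
  (C1 C2 C3 D1 D2 D3 E1 E2 : nconcept CN RN) :
  wf_nc isNat isIntra C1 -> wf_nc isNat isIntra C2 -> wf_nc isNat isIntra C3 ->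
  wf_nc isNat isIntra D1 -> wf_nc isNat isIntra D2 -> wf_nc isNat isIntra D3 ->
  wf_nc isNat isIntra E1 -> wf_nc isNat isIntra E2 ->
  entails isIntra [:: Analogy C1 C2 D1 D2; Analogy D1 D2 E1 E2]
                  (Analogy C1 C2 E1 E2) /\
  entails isIntra [:: Analogy C1 C2 D1 D2; Analogy C2 C3 D2 D3]
                  (Analogy C1 C3 D1 D3).
Proof.
move=> _ _ _ _ _ _ _ _; split => D F k M [Hd Hsat _ _].
- have [g [m1 m2]] := Hsat _ (or_introl erefl).
  have [g' [m3 m4]] := Hsat _ (or_intror (or_introl erefl)).
  have [t1 [qC e1]] := mu_Q Hd m1.
  have [t1' [qD e1']] := mu_Q Hd m2.
  have [t2 [qD' e2]] := mu_Q Hd m3.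
  have [t2' [qE e2']] := mu_Q Hd m4.
  have Ea : t1' =1 t1.
    by apply: (gt_inj Hd (Q1 qD) (Q1 qC)) => f; rewrite -e1' e1.
  have Eb : t2' =1 t2.
    by apply: (gt_inj Hd (Q1 qE) (Q1 qD')) => f; rewrite -e2' e2.
  have qD1 := Q_ext Ea qD.
  have qE2 := Q_ext Eb qE.
  suff [t [h1 h2]] : exists t, Q M (phiS M (nint M C1)) (phiS M (nint M C2)) t /\
                            Q M (phiS M (nint M E1)) (phiS M (nint M E2)) t.
    by exists (gt M t); split; apply: Q_mu.
  case: (phi_cases Hd (nint M D1)) => [Dt|sp].
    case: (phi_cases Hd (nint M C1)) => [Ct|spC].
      exists t2; split => //.
      have eC2 : phiS M (nint M C2) = phiS M (nint M D2).
        by rewrite (Q5 qC) (Q5 qD1) Ct Dt.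
      by rewrite Ct eC2 -Dt.
    case: (phi_cases Hd (nint M E1)) => [Et|spE].
      exists t1; split => //.
      have eE2 : phiS M (nint M E2) = phiS M (nint M D2).
        by rewrite (Q5 qE2) (Q5 qD') Et Dt.
      by rewrite Et eE2 -Dt.
    rewrite Dt in qD1 qD'.
    have i1 := Q_setT_id Hd qD1 qC spC.
    have i2 := Q_setT_id Hd qD' qE2 spE.
    exists t1; split => //; apply: Q_ext qE2 => s; by rewrite i1 i2.
  have E := Q_sparse_eq Hd qD1 qD' sp.
  exists t1; split => //; apply: Q_ext qE2 => s; by rewrite E.
- have [g [m1 m2]] := Hsat _ (or_introl erefl).
  have [g' [m3 m4]] := Hsat _ (or_intror (or_introl erefl)).
  have [t1 [qC e1]] := mu_Q Hd m1.
  have [t1' [qD e1']] := mu_Q Hd m2.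
  have [t2 [qC2 e2]] := mu_Q Hd m3.
  have [t2' [qD2 e2']] := mu_Q Hd m4.
  have Ea : t1' =1 t1.
    by apply: (gt_inj Hd (Q1 qD) (Q1 qC)) => f; rewrite -e1' e1.
  have Eb : t2' =1 t2.
    by apply: (gt_inj Hd (Q1 qD2) (Q1 qC2)) => f; rewrite -e2' e2.
  have qD1 := Q_ext Ea qD.
  have qD2' := Q_ext Eb qD2.
  exists (gt M (tcomp M (phiS M (nint M C1)) (phiS M (nint M D1)) t1 t2)).
  split; apply: Q_mu => //.
    exact: Q_comp qC qD1 qC2 qD2'.
  apply: Q_ext (Q_comp Hd qD1 qC qD2' qC2).
  exact: tcompC.
Qed.
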